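(* Let $n\ge3$ and suppose $T=T_\lambda(r,m)$ acts linearly and inner faithfully on $\Bbbk\overline{Q}$ so that $g$ acts by a rotation: $g\cdot e_i=e_{i+d}$, $g\cdot a_i=\mu_ia_{i+d}$, $g\cdot a_i^*=\mu_i^*a^*_{i+d}$ for some integer $0<d\le n-1$ and $\mu_i,\mu_i^*\in\Bbbk^\times$. Let $\sigma$ be the quiver-Taft map of the action. Then there exist $c_0,c_1,c_0^*,c_1^*\in\Bbbk$ such that for all $0\le i\le n-1$ (empty products being $1$): $$\sigma(a_i)=\begin{cases}\lambda^{i/2}\frac{\mu_i\mu_{i-2}\cdots\mu_2}{\mu^*_{i-1}\mu^*_{i-3}\cdots\mu^*_1}c_0a^*_{i-1} & d=n-2,\ i\text{ even},\\ \lambda^{(i-1)/2}\frac{\mu_i\mu_{i-2}\cdots\mu_3}{\mu^*_{i-1}\mu^*_{i-3}\cdots\mu^*_2}c_1a^*_{i-1} & d=n-2,\ i\text{ odd},\\ \lambda^i(\mu_i\mu_{i-1}\cdots\mu_1)c_0e_i & d=n-1,\\ 0 & d\ne n-1,n-2,\end{cases}$$ $$\sigma(a_i^* )=\begin{cases}\lambda^{-i/2}\frac{\mu_{i-1}\mu_{i-3}\cdots\mu_1}{\mu^*_{i-2}\mu^*_{i-4}\cdots\mu^*_0}c_0^*a_{i+1} & d=2,\ i\text{ even},\\ \lambda^{-(i-1)/2}\frac{\mu_{i-1}\mu_{i-3}\cdots\mu_2}{\mu^*_{i-2}\mu^*_{i-4}\cdots\mu^*_1}c_1^*a_{i+1}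 & d=2,\ i\text{ odd},\\ (\lambda^i\mu^*_{i-1}\mu^*_{i-2}\cdots\mu^*_0)^{-1}c_0^*e_{i+1} & d=1,\\ 0 & d\neq1,2.\end{cases}$$
   Context: Let $\Bbbk$ be a field, $r>1$ and $m$ positive integers with $r\mid m$, and $\lambda\in\Bbbk$ a primitive $r$-th root of unity, with $r$ coprime to the characteristic of $\Bbbk$. The generalized Taft algebra $T=T_\lambda(r,m)$ is the Hopf algebra generated by $g,x$ with relations $gx=\lambda xg$, $g^m=1$, $x^r=0$, $\Delta(g)=g\otimes g$, $\Delta(x)=1\otimes x+x\otimes g$, $\varepsilon(g)=1,\varepsilon(x)=0$, $S(g)=g^{-1}$, $S(x)=-xg^{-1}$. An action of $T$ on an algebra $A$ is a $T$-module algebra structure; so $g$ acts by an algebra automorphism and $x\cdot(ab)=a(x\cdot b)+(x\cdot a)(g\cdot b)$. It is inner faithful if no nonzero Hopf ideal $I$ of $T$ satisfies $I\cdot A=0$. Vertex indices are taken modulo $n$. $\overline{Q}$ has vertices $0,\dots,n-1$ and arrows $a_i:i\to i+1$, $a_i^*:i+1\to i$; in $\Bbbk\overline{Q}$, $e_i$ is the trivial path at $i$, $s(a),t(a)$ source and target, and $pq$ is concatenation ($p$ then $q$) if $t(p)=s(q)$, else $0$. A linear action: $g$ acts by a path-length-preserving automorphism ($g\cdot e_i=e_{g\cdot i}$) and $x$ maps vertices into the span of vertices and arrows into the span of vertices and arrows. Then there are scalars $\gamma_i$ with $x\cdot e_i=\gamma_ie_i-\gamma_i\lambda^{-1}e_{g\cdot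 i}$; the quiver-Taft map $\sigma$ is the linear map on the span of vertices and arrows with $\sigma(e_i)=0$ and $\sigma(a)=x\cdot a-\gamma_{t(a)}a+\gamma_{s(a)}\lambda^{-1}(g\cdot a)$ for arrows $a$. (It satisfies $\sigma(a)=e_{s(a)}\sigma(a)e_{g\cdot t(a)}$ and $\sigma(g\cdot a)=\lambda^{-1}g\cdot\sigma(a)$.) *)

(* Defs.v *)
From HB Require Import structures.
From mathcomp Require Import all_boot all_order all_algebra.
Set Implicit Arguments. Unset Strict Implicit. Unset Printing Implicit Defensive.
Import Order.TTheory GRing.Theory Num.Theory.
Local Open Scope ring_scope.

(* The generalized Taft algebra T_lam(r,m), modelled concretely on its *)
(* basis { g^a x^b : a < m, b < r }.                                   *)
Section Taft.
Variables (K : fieldType) (m r : nat) (lam : K).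

Local Notation TA := {ffun 'I_m * 'I_r -> K^o}.

(* the basis element g^(a mod m) x^b  (which is 0 when b >= r) *)
Definition tbn (a b : nat) : TA :=
  [ffun p : 'I_m * 'I_r => (((p.1 : nat) == (a %% m)%N) && ((p.2 : nat) == b))%:R].

(* (g^a x^b)(g^c x^e) = lam^(-bc) g^(a+c) x^(b+e)   (from gx = lam xg) *)
Definition bmul (p q : 'I_m * 'I_r) : TA :=
  lam ^- (p.2 * q.1) *: tbn (p.1 + q.1) (p.2 + q.2).

Definition tmul (s t : TA) : TA :=
  \sum_(p : 'I_m * 'I_r) \sum_(q : 'I_m * 'I_r) (s p * t q) *: bmul p q.

Definition tone : TA := tbn 0 0.
Definition tg : TA := tbn 1 0.
Definition tx : TA := tbn 0 1.
Definition tginv : TA := tbn m.-1 0.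

(* T (x) T, coefficients on pairs of basis elements *)
Local Notation TT := {ffun ('I_m * 'I_r) * ('I_m * 'I_r) -> K^o}.

Definition tens (s t : TA) : TT := [ffun pq => s pq.1 * t pq.2].

Definition ttmul (u v : TT) : TT :=
  \sum_(pq : ('I_m * 'I_r) * ('I_m * 'I_r))
   \sum_(pq' : ('I_m * 'I_r) * ('I_m * 'I_r))
     (u pq * v pq') *: tens (bmul pq.1 pq'.1) (bmul pq.2 pq'.2).

(* Delta(g^a x^b) = (g (x) g)^a (1 (x) x + x (x) g)^b *)
Definition comul_b (a b : nat) : TT :=
  iter a (ttmul (tens tg tg))
    (iter b (ttmul (tens tone tx + tens tx tg)) (tens tone tone)).

Definition comul (t : TA) : TT := \sum_(p : 'I_m * 'I_r) t p *: comul_b p.1 p.2.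

Definition counit (t : TA) : K := \sum_(p : 'I_m * 'I_r | (p.2 : nat) == 0%N) t p.

(* S(g^a x^b) = S(x)^b S(g)^a = (- x g^-1)^b g^-a *)
Definition antipode_b (a b : nat) : TA :=
  iter b (tmul (- tmul tx tginv)) (iter a (tmul tginv) tone).

Definition antipode (t : TA) : TA := \sum_(p : 'I_m * 'I_r) t p *: antipode_b p.1 p.2.

Definition hopf_ideal (I : TA -> Prop) : Prop :=
  I 0 /\
  (forall u v, I u -> I v -> I (u + v)) /\
  (forall (c : K) u, I u -> I (c *: u)) /\
  (forall t u, I u -> I (tmul t u) /\ I (tmul u t)) /\
  (forall u, I u -> counit u = 0) /\
  (forall u, I u -> I (antipode u)) /\
  (forall u, I u -> exists s : seq (TA * TA),
      (forall pq, pq \in s -> I pq.1 \/ I pq.2) /\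
      comul u = \sum_(pq <- s) tens pq.1 pq.2).

Section Action.
Variable A : algType K.

Definition taft_act (G X : A -> A) (t : TA) (v : A) : A :=
  \sum_(p : 'I_m * 'I_r) t p *: iter p.1 G (iter p.2 X v).

(* (G, X) define a T-module algebra structure on A: A is a T-module
   (relations gx = lam xg, g^m = 1, x^r = 0), and the generators act
   compatibly with the multiplication and unit, using
   Delta(g) = g (x) g, Delta(x) = 1 (x) x + x (x) g, eps(g)=1, eps(x)=0. *)
Definition taft_module_algebra (G X : A -> A) : Prop :=
  (forall (c : K) u v, G (c *: u + v) = c *: G u + G v) /\
  (forall (c : K) u v, X (c *: u + v) = c *: X u + X v) /\
  (forall u, G (X u) = lam *: X (G u)) /\
  (forall u, iter m G u = u) /\
  (forall u, iter r X u = 0) /\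
  G 1 = 1 /\ (forall u v, G (u * v) = G u * G v) /\
  X 1 = 0 /\ (forall u v, X (u * v) = u * X v + X u * G v).

Definition inner_faithful (G X : A -> A) : Prop :=
  forall I, hopf_ideal I -> (forall t v, I t -> taft_act G X t v = 0) ->
    forall t, I t -> t = 0.

End Action.
End Taft.

(* The path algebra of the cyclic double quiver Qbar on n vertices:    *)
(* vertices e i, arrows a i : i -> i+1, as_ i : i+1 -> i (mod n).      *)
Section PathAlgebra.
Variables (K : fieldType) (A : algType K) (n : nat) (e a as_ : nat -> A).

(* arrows: (i, false) = a_i, (i, true) = a_i^* *)
Definition arr_src (x : 'I_n * bool) : nat :=
  if x.2 then (((x.1 : nat) + 1) %% n)%N else x.1.
Definition arr_tgt (x : 'I_n * bool) : nat :=
  if x.2 then (x.1 : nat) else (((x.1 : nat) + 1) %% n)%N.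
Definition arr_el (x : 'I_n * bool) : A := if x.2 then as_ x.1 else a x.1.

(* a path: starting vertex and list of arrows *)
Definition qpath := ('I_n * seq ('I_n * bool))%type.

Fixpoint chain (v : nat) (s : seq ('I_n * bool)) : bool :=
  if s is x :: s' then (arr_src x == v) && chain (arr_tgt x) s' else true.

Definition valid_path (p : qpath) : bool := chain p.1 p.2.

Definition path_eval (p : qpath) : A :=
  if p.2 is [::] then e p.1 else \prod_(x <- p.2) arr_el x.

Definition is_path_algebra : Prop :=
  (forall i j, (i < n)%N -> (j < n)%N -> e i * e j = if i == j then e i else 0) /\
  \sum_(i < n) e i = 1 /\
  (forall i, (i < n)%N ->
     a i = e i * a i * e (((i + 1) %% n)%N) /\ as_ i = e (((i + 1) %% n)%N) * as_ i * e i) /\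
  (forall (ps : seq qpath) (c : qpath -> K), uniq ps -> all valid_path ps ->
     \sum_(p <- ps) c p *: path_eval p = 0 -> forall p, p \in ps -> c p = 0) /\
  (forall u : A, exists (ps : seq qpath) (c : qpath -> K),
     all valid_path ps /\ u = \sum_(p <- ps) c p *: path_eval p).

(* linearity of the action of x: vertices go to the span of vertices,
   arrows to the span of vertices and arrows *)
Definition in_span_vertices (u : A) : Prop :=
  exists c : nat -> K, u = \sum_(j < n) c j *: e j.
Definition in_span_vert_arrows (u : A) : Prop :=
  exists c0 c1 c2 : nat -> K,
    u = \sum_(j < n) (c0 j *: e j + c1 j *: a j + c2 j *: as_ j).

End PathAlgebra.

(* The quiver-Taft map on an arrow u with source s and target t:
   sigma(u) = x.u - gamma_t u + gamma_s lam^-1 (g.u) *)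
Definition qt_sigma (K : fieldType) (A : algType K) (G X : A -> A) (lam : K)
  (gam : nat -> K) (s t : nat) (u : A) : A :=
  X u - gam t *: u + (gam s / lam) *: G u.

(* Main.v *)
Require Import Defs.
From HB Require Import structures.
From mathcomp Require Import all_boot all_order all_algebra.
From mathcomp Require Import zify ring.
Import Order.TTheory GRing.Theory Num.Theory.
Local Open Scope ring_scope.

Lemma mod2 x n : (x < n + n)%N -> (x %% n = if x < n then x else x - n)%N.
Proof.
move=> h; case: ltnP => h2; first by rewrite modn_small.
have ->: x = ((x - n) + n)%N by lia.
by rewrite modnDr modn_small; lia.
Qed.

Ltac msimp := repeat match goal with |- context [(?x %% ?n)%N] =>
   lazymatch x with context [(_ %% _)%N] => fail | _ =>
   rewrite (@mod2 x n); [case: (ltnP x n) => ? | lia] end end.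

Section Arith.
Variables (n d i : nat).
Hypotheses (n3 : (3 <= n)%N) (d0 : (0 < d)%N) (dn : (d <= n - 1)%N) (hi : (i < n)%N).
Lemma ar1 : (i == ((i+1)%%n + d)%%n)%N = (d == n-1)%N. Proof. msimp; apply/eqP/eqP; lia. Qed.
Lemma ar2 : ((i+1)%%n == ((i+1)%%n + d)%%n)%N = false. Proof. msimp; apply/eqP; lia. Qed.
Lemma ar3 : ((((i+1)%%n + d)%%n + 1)%%n == i)%N = (d == n-2)%N. Proof. msimp; apply/eqP/eqP; lia. Qed.
Lemma ar4 : d = (n-2)%N -> (((i+1)%%n + d)%%n = (i+n-1)%%n)%N. Proof. msimp; lia. Qed.
Lemma ar5 : ((i+1)%%n == (i+d)%%n)%N = (d == 1)%N. Proof. msimp; apply/eqP/eqP; lia. Qed.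
Lemma ar6 : (((i+1)%%n+1)%%n == (i+d)%%n)%N = (d == 2)%N. Proof. msimp; apply/eqP/eqP; lia. Qed.
Lemma ar7 : (((i+d)%%n+1)%%n == (i+1)%%n)%N = false. Proof. msimp; apply/eqP; lia. Qed.
Lemma ar8 : (i == (i+d)%%n)%N = false. Proof. msimp; apply/eqP; lia. Qed.
End Arith.

Lemma ar9 n d i : (3 <= n)%N -> d = (n-2)%N -> (i.+2 < n)%N ->
  [/\ ((i.+2 + d)%%n = i)%N, ((i.+2+n-1)%%n = i.+1)%N & ((i.+1+d)%%n = (i+n-1)%%n)%N].
Proof. move=> *; split; msimp; lia. Qed.
Lemma ar10 n d i : (3 <= n)%N -> d = (n-1)%N -> (i.+1 < n)%N -> ((i.+1+d)%%n = i)%N.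
Proof. move=> *; msimp; lia. Qed.
Lemma ar11 n i d : ((((i+1)%%n + d)%%n + d)%%n = (((i+d)%%n + 1)%%n + d)%%n)%N.
Proof. by rewrite !modnDml -!addnA !modnDml; congr (_ %% _)%N; lia. Qed.
Lemma ar12 n i d : (((i+1)%%n + d)%%n = ((i+d)%%n + 1)%%n)%N.
Proof. by rewrite !modnDml; congr (_ %% _)%N; lia. Qed.

Section Main.
Variables (K : fieldType) (A : algType K) (n : nat) (e a as_ : nat -> A) (G X : A -> A)
  (d : nat) (lam : K) (mu mus gam : nat -> K).
Hypotheses (n3 : (3 <= n)%N) (d0 : (0 < d)%N) (dn : (d <= n - 1)%N).
Hypothesis EE : forall i j, (i < n)%N -> (j < n)%N -> e i * e j = if i == j then e i else 0.
Hypothesis AE : forall i, (i < n)%N ->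
     a i = e i * a i * e (((i + 1) %% n)%N) /\ as_ i = e (((i + 1) %% n)%N) * as_ i * e i.
Hypothesis NZ : forall i, (i < n)%N -> e i != 0 /\ as_ i != 0.
Hypothesis Glin : forall (c : K) u v, G (c *: u + v) = c *: G u + G v.
Hypothesis Xlin : forall (c : K) u v, X (c *: u + v) = c *: X u + X v.
Hypothesis GX : forall u, G (X u) = lam *: X (G u).
Hypothesis GM : forall u v, G (u * v) = G u * G v.
Hypothesis XM : forall u v, X (u * v) = u * X v + X u * G v.
Hypothesis lam0 : lam != 0.
Hypothesis munz : forall i, (i < n)%N -> mu i != 0 /\ mus i != 0.
Hypothesis Gact : forall i, (i < n)%N ->
     G (e i) = e (((i + d) %% n)%N) /\
     G (a i) = mu i *: a (((i + d) %% n)%N) /\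
     G (as_ i) = mus i *: as_ (((i + d) %% n)%N).
Hypothesis Xe : forall i, (i < n)%N ->
     X (e i) = gam i *: e i - (gam i / lam) *: e (((i + d) %% n)%N).
Hypothesis span : forall i, (i < n)%N ->
     in_span_vert_arrows n e a as_ (X (a i)) /\
     in_span_vert_arrows n e a as_ (X (as_ i)).

Let n0 : (0 < n)%N. Proof. lia. Qed.

Lemma X0 : X 0 = 0.
Proof.
have h := Xlin 1 0 0; rewrite !scale1r addr0 in h.
by apply: (@addrI _ (X 0)); rewrite addr0 -h.
Qed.
Lemma XZ c u : X (c *: u) = c *: X u.
Proof. by have := Xlin c u 0; rewrite addr0 X0 addr0. Qed.
Lemma G0 : G 0 = 0.
Proof.
have h := Glin 1 0 0; rewrite !scale1r addr0 in h.
by apply: (@addrI _ (G 0)); rewrite addr0 -h.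
Qed.
Lemma GZ c u : G (c *: u) = c *: G u.
Proof. by have := Glin c u 0; rewrite addr0 G0 addr0. Qed.

Lemma sum1n (F : nat -> A) k : (k < n)%N -> (forall j, (j < n)%N -> j != k -> F j = 0) ->
  \sum_(j < n) F j = F k.
Proof.
move=> hk h; rewrite (bigD1 (Ordinal hk)) //= big1 ?addr0 // => j hj.
apply: h => //; apply: contra hj => /eqP hjk; apply/eqP; exact: val_inj.
Qed.

Lemma SE s j t : (s < n)%N -> (j < n)%N -> (t < n)%N ->
  e s * e j * e t = if (s == j) && (j == t) then e j else 0.
Proof.
move=> hs hj ht; rewrite EE //; case: eqP => [<-|_] /=; last by rewrite mul0r.
by rewrite EE //; case: eqP.
Qed.

Lemma SA s j t : (s < n)%N -> (j < n)%N -> (t < n)%N ->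
  e s * a j * e t = if (s == j) && (((j+1) %% n)%N == t) then a j else 0.
Proof.
move=> hs hj ht; case: (eqVneq s j) => [<-{j hj}|hsj] /=; last first.
  by rewrite {1}(AE _ hj).1 !mulrA EE // (negbTE hsj) !mul0r.
have [h _] := AE _ hs.
rewrite {1}h !mulrA EE // eqxx -(mulrA _ (e _)) EE ?ltn_pmod //.
by case: eqP => _; [rewrite -h | rewrite mulr0].
Qed.

Lemma SS s j t : (s < n)%N -> (j < n)%N -> (t < n)%N ->
  e s * as_ j * e t = if (s == ((j+1) %% n)%N) && (j == t) then as_ j else 0.
Proof.
move=> hs hj ht; have [_ h] := AE _ hj.
case: (eqVneq s ((j+1) %% n)%N) => [hsj|hsj] /=; last first.
  by rewrite {1}h !mulrA EE ?ltn_pmod // (negbTE hsj) !mul0r.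
rewrite hsj {1}h !mulrA EE ?ltn_pmod // eqxx -(mulrA _ (e j)) EE //.
by case: eqP => _; [rewrite -h | rewrite mulr0].
Qed.

Lemma sandw s t (c0 c1 c2 : nat -> K) : (s < n)%N -> (t < n)%N ->
  e s * (\sum_(j < n) (c0 j *: e j + c1 j *: a j + c2 j *: as_ j)) * e t =
  (if s == t then c0 s *: e s else 0) + (if ((s+1) %% n)%N == t then c1 s *: a s else 0)
  + (if ((t+1) %% n)%N == s then c2 t *: as_ t else 0).
Proof.
move=> hs ht; rewrite mulr_sumr mulr_suml.
pose F0 := fun j : nat => c0 j *: (if (s == j) && (j == t) then e j else 0).
pose F1 := fun j : nat => c1 j *: (if (s == j) && (((j+1) %% n)%N == t) then a j else 0).
pose F2 := fun j : nat => c2 j *: (if (s == ((j+1) %% n)%N) && (j == t) then as_ j else 0).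
rewrite (eq_bigr (fun j : 'I_n => F0 j + F1 j + F2 j)); last first.
  move=> j _; rewrite !mulrDr !mulrDl -!scalerAr -!scalerAl.
  by rewrite SE ?SA ?SS.
rewrite !big_split /=.
rewrite (sum1n F0 _ hs); last by move=> j _ hj; rewrite /F0 eq_sym (negbTE hj) scaler0.
rewrite (sum1n F1 _ hs); last by move=> j _ hj; rewrite /F1 eq_sym (negbTE hj) scaler0.
rewrite (sum1n F2 _ ht); last by move=> j _ hj; rewrite /F2 (negbTE hj) andbF scaler0.
rewrite /F0 /F1 /F2 !eqxx /= andbT [(s == ((t+1) %% n)%N)]eq_sym.
by repeat (case: ifP => _); rewrite ?scaler0.
Qed.


Lemma sigE u s t : (s < n)%N -> (t < n)%N -> e s * u * e t = u ->
  X u - gam t *: u + (gam s / lam) *: G u = e s * X u * e (((t + d) %% n)%N).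
Proof.
move=> hs ht hu.
have hs' : (((s + d) %% n) < n)%N by rewrite ltn_pmod.
have ht' : (((t + d) %% n) < n)%N by rewrite ltn_pmod.
have es : e s * u = u by rewrite -{1}hu !mulrA EE // eqxx.
have ut : u * e t = u by rewrite -{1}hu -mulrA EE // eqxx.
have hG : G u = e ((s + d) %% n)%N * G u * e ((t + d) %% n)%N.
  by rewrite -{1}hu !GM (Gact _ hs).1 (Gact _ ht).1.
have Gu : G u = e ((s + d) %% n)%N * G u.
  by rewrite {2}hG !mulrA EE // eqxx -hG.
have ess : e s * e ((s + d) %% n)%N = 0 by rewrite EE // ar8.
have ut' : u * e ((t + d) %% n)%N = 0 by rewrite -ut -mulrA EE // ar8 // mulr0.
have hXeG : X (e s) * G u = - ((gam s / lam) *: G u).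
  rewrite (Xe _ hs) mulrBl -!scalerAl {1}Gu mulrA ess mul0r scaler0 sub0r -Gu //.
have h1 := XM (e s) u; rewrite es hXeG in h1.
have h1' : e s * X u = X u + (gam s / lam) *: G u by rewrite {2}h1 addrNK.
have h2 := XM u (e t); rewrite ut (Xe _ ht) (Gact _ ht).1 mulrBr -!scalerAr ut ut' scaler0 subr0 in h2.
have h2' : X u * e ((t + d) %% n)%N = X u - gam t *: u by rewrite {2}h2 addrC addKr.
by rewrite -mulrA h2' mulrBr -scalerAr es h1' addrAC.
Qed.

Lemma GS u s t : (s < n)%N -> (t < n)%N ->
  G (e s * u * e t) = e ((s + d) %% n)%N * G u * e ((t + d) %% n)%N.
Proof. by move=> hs ht; rewrite !GM (Gact _ hs).1 (Gact _ ht).1. Qed.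

Definition Sa i := qt_sigma G X lam gam i (((i + 1) %% n)%N) (a i).
Definition Ss i := qt_sigma G X lam gam (((i + 1) %% n)%N) i (as_ i).

Lemma SaE i : (i < n)%N -> Sa i = e i * X (a i) * e ((((i + 1) %% n) + d) %% n)%N.
Proof.
move=> hi; rewrite /Sa /qt_sigma; apply: sigE => //; first by rewrite ltn_pmod.
by rewrite -(AE _ hi).1.
Qed.

Lemma SsE i : (i < n)%N -> Ss i = e ((i + 1) %% n)%N * X (as_ i) * e ((i + d) %% n)%N.
Proof.
move=> hi; rewrite /Ss /qt_sigma; apply: sigE => //; first by rewrite ltn_pmod.
by rewrite -(AE _ hi).2.
Qed.

Lemma EqA i : (i < n)%N -> G (Sa i) = (lam * mu i) *: Sa ((i + d) %% n)%N.
Proof.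
move=> hi; have hi' : (((i + d) %% n) < n)%N by rewrite ltn_pmod.
rewrite SaE // SaE // GS ?ltn_pmod // GX (Gact _ hi).2.1 XZ scalerA.
rewrite -scalerAr -scalerAl; by rewrite ar11.
Qed.

Lemma EqS i : (i < n)%N -> G (Ss i) = (lam * mus i) *: Ss ((i + d) %% n)%N.
Proof.
move=> hi; have hi' : (((i + d) %% n) < n)%N by rewrite ltn_pmod.
rewrite SsE // SsE // GS ?ltn_pmod // GX (Gact _ hi).2.2 XZ scalerA.
rewrite -scalerAr -scalerAl; by rewrite ar12.
Qed.

Lemma shapeA i : (i < n)%N -> exists f, Sa i =
  if d == (n - 2)%N then f *: as_ ((i + n - 1) %% n)%N
  else if d == (n - 1)%N then f *: e i else 0.
Proof.
move=> hi; have [c0 [c1 [c2 hX]]] := (span _ hi).1.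
rewrite SaE // hX sandw ?ltn_pmod // ar1 // ar2 // ar3 //.
case: (eqVneq d (n - 2)%N) => [hd|hd].
  have h1 : (d == n - 1)%N = false by apply/eqP; lia.
  exists (c2 ((((i + 1) %% n) + d) %% n)%N).
  have -> : ((((i + 1) %% n) + d) %% n = (i + n - 1) %% n)%N by rewrite hd; msimp; lia.
  by rewrite h1 !add0r.
case: (eqVneq d (n - 1)%N) => [hd'|hd'].
  by exists (c0 i); rewrite !addr0.
by exists 0; rewrite !addr0.
Qed.

Lemma shapeS i : (i < n)%N -> exists f, Ss i =
  if d == 2%N then f *: a ((i + 1) %% n)%N
  else if d == 1%N then f *: e ((i + 1) %% n)%N else 0.
Proof.
move=> hi; have [c0 [c1 [c2 hX]]] := (span _ hi).2.
rewrite SsE // hX sandw ?ltn_pmod // ar5 // ar6 // ar7 // addr0.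
case: (eqVneq d 2%N) => [hd|hd].
  have h1 : (d == 1)%N = false by apply/eqP; lia.
  by exists (c1 ((i + 1) %% n)%N); rewrite h1 add0r.
case: (eqVneq d 1%N) => [hd'|hd'].
  by exists (c0 ((i + 1) %% n)%N); rewrite !addr0.
by exists 0; rewrite !addr0.
Qed.

Lemma cancelv (v : A) (x y : K) : v != 0 -> x *: v = y *: v -> x = y.
Proof.
move=> hv h; apply/eqP; rewrite -subr_eq0.
have /eqP : (x - y) *: v = 0 by rewrite scalerBl h subrr.
by rewrite scaler_eq0 (negbTE hv) orbF.
Qed.

Lemma LA : exists c0 c1 : K, forall i, (i < n)%N -> Sa i =
      (if d == (n - 2)%N then
         (if ~~ odd i then
            (lam ^+ i./2 * (\prod_(k < i./2) mu (i - 2 * k)%N)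
               / (\prod_(k < i./2) mus (i - 1 - 2 * k)%N) * c0)
              *: as_ (((i + n - 1) %% n)%N)
          else
            (lam ^+ (i - 1)./2 * (\prod_(k < (i - 1)./2) mu (i - 2 * k)%N)
               / (\prod_(k < (i - 1)./2) mus (i - 1 - 2 * k)%N) * c1)
              *: as_ (((i + n - 1) %% n)%N))
       else if d == (n - 1)%N then
         (lam ^+ i * (\prod_(k < i) mu k.+1) * c0) *: e i
       else 0).
Proof.
case: (eqVneq d (n - 2)%N) => [hd|hd].
  have [f0 hf0] := shapeA 0 n0; rewrite hd eqxx in hf0.
  have h1n : (1 < n)%N by lia.
  have [f1 hf1] := shapeA 1 h1n; rewrite hd eqxx in hf1.
  exists f0, f1.
  pose F i := lam ^+ i./2 * (\prod_(k < i./2) mu (i - 2 * k)%N)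
     / (\prod_(k < i./2) mus (i - 1 - 2 * k)%N) * (if odd i then f1 else f0).
  have Fstep k : F k.+2 = lam * mu k.+2 * F k / mus k.+1.
    rewrite /F /= negbK !big_ord_recl /= !muln0 !subn0.
    have -> : \prod_(j < k./2) mu (k.+2 - 2 * lift ord0 j)%N = \prod_(j < k./2) mu (k - 2 * j)%N.
      by apply: eq_bigr => j _; rewrite lift0; congr mu; lia.
    have -> : \prod_(j < k./2) mus (k.+2 - 1 - 2 * lift ord0 j)%N = \prod_(j < k./2) mus (k - 1 - 2 * j)%N.
      by apply: eq_bigr => j _; rewrite lift0; congr mus; lia.
    have -> : (k.+2 - 1 = k.+1)%N by lia.
    rewrite exprS !invfM; ring.
  have key k : ((k < n)%N -> Sa k = F k *: as_ ((k + n - 1) %% n)%N) /\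
               ((k.+1 < n)%N -> Sa k.+1 = F k.+1 *: as_ ((k.+1 + n - 1) %% n)%N).
    elim: k => [|k [IH1 IH2]].
      split=> h.
        by rewrite hf0 /F /= !big_ord0 expr0 invr1 !mulr1 mul1r.
      by rewrite hf1 /F /= !big_ord0 expr0 invr1 !mulr1 mul1r.
    split; first exact: IH2.
    move=> hk2; have hk : (k < n)%N by lia.
    have hk1 : (k.+1 < n)%N by lia.
    have [g hg] := shapeA k.+2 hk2; rewrite hd eqxx in hg.
    have [a1 a2 a3] := ar9 _ _ _ n3 hd hk2.
    have := EqA k.+2 hk2.
    rewrite hg GZ a2 (Gact _ hk1).2.2 scalerA a3 a1 (IH1 hk) scalerA => h.
    have hg2 := cancelv _ _ _ (NZ _ (ltn_pmod _ n0)).2 h.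
    congr (_ *: _).
    apply: (mulIf (munz _ hk1).2); by rewrite hg2 Fstep divfK // (munz _ hk1).2.
  move=> i hi; rewrite ((key i).1 hi) /F.
  case: (boolP (odd i)) => ho //=.
  by have -> : ((i - 1)./2 = i./2)%N by lia.
case: (eqVneq d (n - 1)%N) => [hd'|hd'].
  have [f0 hf0] := shapeA 0 n0; rewrite (negbTE hd) hd' eqxx in hf0.
  exists f0, 0.
  have key k : (k < n)%N -> Sa k = (lam ^+ k * (\prod_(j < k) mu j.+1) * f0) *: e k.
    elim: k => [|k IH] hk.
      by rewrite hf0 expr0 big_ord0 !mul1r.
    have hk' : (k < n)%N by lia.
    have [g hg] := shapeA k.+1 hk; rewrite (negbTE hd) hd' eqxx in hg.
    have := EqA k.+1 hk.
    rewrite hg GZ (Gact _ hk).1 (ar10 _ _ _ n3 hd' hk) (IH hk') scalerA => h.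
    have hg2 := cancelv _ _ _ (NZ _ hk').1 h.
    by rewrite hg2 exprS big_ord_recr /=; congr (_ *: _); ring.
  by move=> i hi; apply: key.
exists 0, 0 => i hi; have [f hf] := shapeA i hi.
by rewrite (negbTE hd) (negbTE hd') in hf.
Qed.

Lemma LS : exists c0s c1s : K, forall i, (i < n)%N -> Ss i =
      (if d == 2%N then
         (if ~~ odd i then
            (lam ^- i./2 * (\prod_(k < i./2) mu (i - 1 - 2 * k)%N)
               / (\prod_(k < i./2) mus (i - 2 - 2 * k)%N) * c0s)
              *: a (((i + 1) %% n)%N)
          else
            (lam ^- (i - 1)./2 * (\prod_(k < (i - 1)./2) mu (i - 1 - 2 * k)%N)
               / (\prod_(k < (i - 1)./2) mus (i - 2 - 2 * k)%N) * c1s)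
              *: a (((i + 1) %% n)%N))
       else if d == 1%N then
         ((lam ^+ i * \prod_(k < i) mus k)^-1 * c0s) *: e (((i + 1) %% n)%N)
       else 0).
Proof.
case: (eqVneq d 2%N) => [hd|hd].
  have [f0 hf0] := shapeS 0 n0; rewrite hd eqxx in hf0.
  have h1n : (1 < n)%N by lia.
  have [f1 hf1] := shapeS 1 h1n; rewrite hd eqxx in hf1.
  exists f0, f1.
  pose F i := lam ^- i./2 * (\prod_(k < i./2) mu (i - 1 - 2 * k)%N)
     / (\prod_(k < i./2) mus (i - 2 - 2 * k)%N) * (if odd i then f1 else f0).
  have Fstep k : F k.+2 = (lam * mus k)^-1 * (F k * mu k.+1).
    rewrite /F /= negbK !big_ord_recl /= !muln0 !subn0.
    have -> : \prod_(j < k./2) mu (k.+2 - 1 - 2 * lift ord0 j)%N = \prod_(j < k./2) mu (k - 1 - 2 * j)%N.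
      by apply: eq_bigr => j _; rewrite lift0; congr mu; lia.
    have -> : \prod_(j < k./2) mus (k.+2 - 2 - 2 * lift ord0 j)%N = \prod_(j < k./2) mus (k - 2 - 2 * j)%N.
      by apply: eq_bigr => j _; rewrite lift0; congr mus; lia.
    have -> : (k.+2 - 1 = k.+1)%N by lia.
    have -> : (k.+2 - 2 = k)%N by lia.
    rewrite exprS !invfM; ring.
  have key k : ((k < n)%N -> Ss k = F k *: a ((k + 1) %% n)%N) /\
               ((k.+1 < n)%N -> Ss k.+1 = F k.+1 *: a ((k.+1 + 1) %% n)%N).
    elim: k => [|k [IH1 IH2]].
      split=> h.
        by rewrite hf0 /F /= !big_ord0 expr0 invr1 !mulr1 mul1r.
      by rewrite hf1 /F /= !big_ord0 expr0 invr1 !mulr1 mul1r.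
    split; first exact: IH2.
    move=> hk2; have hk : (k < n)%N by lia.
    have hk1 : (k.+1 < n)%N by lia.
    have := EqS k hk.
    rewrite (IH1 hk) GZ !addn1 (modn_small hk1) (Gact _ hk1).2.1 scalerA hd !addn2 (modn_small hk2) => h.
    have -> : Ss k.+2 = (lam * mus k)^-1 *: ((F k * mu k.+1) *: a (k.+3 %% n)%N).
      by rewrite h scalerA mulVf ?scale1r // mulf_neq0 // (munz _ hk).2.
    by rewrite scalerA Fstep.
  move=> i hi; rewrite ((key i).1 hi) /F.
  case: (boolP (odd i)) => ho //=.
  by have -> : ((i - 1)./2 = i./2)%N by lia.
case: (eqVneq d 1%N) => [hd'|hd'].
  have [f0 hf0] := shapeS 0 n0; rewrite (negbTE hd) hd' eqxx in hf0.
  exists f0, 0.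
  have key k : (k < n)%N -> Ss k = ((lam ^+ k * \prod_(j < k) mus j)^-1 * f0) *: e ((k + 1) %% n)%N.
    elim: k => [|k IH] hk.
      by rewrite hf0 expr0 big_ord0 !mul1r invr1 mul1r.
    have hk' : (k < n)%N by lia.
    have := EqS k hk'.
    rewrite (IH hk') GZ (Gact _ (ltn_pmod _ n0)).1 hd' !addn1 (modn_small hk) => h.
    have -> : Ss k.+1 = (lam * mus k)^-1 *: (((lam ^+ k * \prod_(j < k) mus j)^-1 * f0) *: e (k.+2 %% n)%N).
      by rewrite h scalerA mulVf ?scale1r // mulf_neq0 // (munz _ hk').2.
    by rewrite scalerA exprS big_ord_recr /= !invfM; congr (_ *: _); ring.
  by move=> i hi; apply: key.
exists 0, 0 => i hi; have [f hf] := shapeS i hi.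
by rewrite (negbTE hd) (negbTE hd') in hf.
Qed.

End Main.

Theorem lemma3p1 (K : fieldType) (r m : nat) (lam : K)
  (n : nat) (A : algType K) (e a as_ : nat -> A) (G X : A -> A)
  (d : nat) (mu mus gam : nat -> K) :
  (1 < r)%N -> (0 < m)%N -> (r %| m)%N -> r.-primitive_root lam -> r%:R != 0 :> K ->
  (3 <= n)%N ->
  is_path_algebra n e a as_ ->
  taft_module_algebra m r lam G X ->
  inner_faithful m r lam G X ->
  (forall i, (i < n)%N ->
     in_span_vertices n e (X (e i)) /\
     in_span_vert_arrows n e a as_ (X (a i)) /\
     in_span_vert_arrows n e a as_ (X (as_ i))) ->
  (0 < d)%N -> (d <= n - 1)%N ->
  (forall i, (i < n)%N -> mu i != 0 /\ mus i != 0) ->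
  (forall i, (i < n)%N ->
     G (e i) = e (((i + d) %% n)%N) /\
     G (a i) = mu i *: a (((i + d) %% n)%N) /\
     G (as_ i) = mus i *: as_ (((i + d) %% n)%N)) ->
  (forall i, (i < n)%N ->
     X (e i) = gam i *: e i - (gam i / lam) *: e (((i + d) %% n)%N)) ->
  exists c0 c1 c0s c1s : K, forall i, (i < n)%N ->
    qt_sigma G X lam gam i (((i + 1) %% n)%N) (a i) =
      (if d == (n - 2)%N then
         (if ~~ odd i then
            (lam ^+ i./2 * (\prod_(k < i./2) mu (i - 2 * k)%N)
               / (\prod_(k < i./2) mus (i - 1 - 2 * k)%N) * c0)
              *: as_ (((i + n - 1) %% n)%N)
          else
            (lam ^+ (i - 1)./2 * (\prod_(k < (i - 1)./2) mu (i - 2 * k)%N)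
               / (\prod_(k < (i - 1)./2) mus (i - 1 - 2 * k)%N) * c1)
              *: as_ (((i + n - 1) %% n)%N))
       else if d == (n - 1)%N then
         (lam ^+ i * (\prod_(k < i) mu k.+1) * c0) *: e i
       else 0)
    /\
    qt_sigma G X lam gam (((i + 1) %% n)%N) i (as_ i) =
      (if d == 2%N then
         (if ~~ odd i then
            (lam ^- i./2 * (\prod_(k < i./2) mu (i - 1 - 2 * k)%N)
               / (\prod_(k < i./2) mus (i - 2 - 2 * k)%N) * c0s)
              *: a (((i + 1) %% n)%N)
          else
            (lam ^- (i - 1)./2 * (\prod_(k < (i - 1)./2) mu (i - 1 - 2 * k)%N)
               / (\prod_(k < (i - 1)./2) mus (i - 2 - 2 * k)%N) * c1s)
              *: a (((i + 1) %% n)%N))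
       else if d == 1%N then
         ((lam ^+ i * \prod_(k < i) mus k)^-1 * c0s) *: e (((i + 1) %% n)%N)
       else 0).
Proof.
move=> r1 m0 rm prim rne n3 [EE [_ [AE [IND _]]]]
  [Glin [Xlin [GX [_ [_ [_ [GM [_ XM]]]]]]]] _ span d0 dn munz Gact Xe.
have n0 : (0 < n)%N by lia.
have lam0 : lam != 0.
  apply/eqP => h0; move: (prim_expr_order prim); rewrite h0 expr0n.
  have -> : (r == 0%N) = false by apply/eqP; lia.
  by move/eqP; rewrite eq_sym oner_eq0.
have gen : forall p : qpath n, valid_path p -> path_eval e a as_ p != 0.
  move=> p hp; apply/eqP => h0.
  have hv1 : all (@valid_path n) [:: p] by rewrite /= hp.
  have hs1 : \sum_(q <- [:: p]) (fun _ => 1 : K) q *: path_eval e a as_ q = 0.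
    by rewrite big_seq1 scale1r h0.
  have := IND [:: p] (fun _ => 1) isT hv1 hs1 p (mem_head _ _).
  by move/eqP; rewrite oner_eq0.
have NZ : forall i, (i < n)%N -> e i != 0 /\ as_ i != 0.
  move=> i hi; split; first exact: (gen (Ordinal hi, [::]) isT).
  have hv : valid_path ((Ordinal (ltn_pmod (i + 1) n0)), [:: (Ordinal hi, true)]).
    by rewrite /valid_path /= /arr_src /= eqxx.
  by have := gen _ hv; rewrite /path_eval /= big_seq1.
have span' : forall i, (i < n)%N ->
     in_span_vert_arrows n e a as_ (X (a i)) /\ in_span_vert_arrows n e a as_ (X (as_ i)).
  by move=> i hi; exact: (span i hi).2.
have [c0 [c1 HA]] := @LA _ _ _ _ _ _ _ _ _ _ _ _ _ n3 d0 dn EE AE NZ Glin Xlin GX GM XM lam0 munz Gact Xe span'.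
have [c0s [c1s HS]] := @LS _ _ _ _ _ _ _ _ _ _ _ _ _ n3 d0 dn EE AE Glin Xlin GX GM XM lam0 munz Gact Xe span'.
by exists c0, c1, c0s, c1s => i hi; split; [exact: HA | exact: HS].
Qed.
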